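(* Consider the $n$-body problem in ${\bf S}^2$ with all masses equal to $m>0$, and let $\alpha_i=2\pi i/n$, $i=1,\dots,n$. If $n$ is odd, then for every $m>0$ and every $z\in(-1,1)$ there exist $\omega>0$ and $\omega<0$ such that ${\bf q}_i(t)=(r\cos(\omega t+\alpha_i), r\sin(\omega t+\alpha_i), z)$, $r=(1-z^2)^{1/2}$, $i=1,\dots,n$, is a solution of the equations of motion (an elliptic relative equilibrium in which the regular $n$-gon rotates in the plane $z=$ constant). If $n$ is even, the same holds for every $z\in(-1,0)\cup(0,1)$.
   Context: The $n$-body problem in ${\bf S}^2$: bodies of masses $m_1,\dots,m_n>0$ have positions ${\bf q}_i=(x_i,y_i,z_i)\in\mathbb R^3$ on the unit sphere ${\bf S}^2=\{{\bf q}:{\bf q}\cdot{\bf q}=1\}$ ($\cdot$ the Euclidean inner product), and satisfy $$\ddot{\bf q}_i=\sum_{j\ne i}\frac{m_j[{\bf q}_j-({\bf q}_i\cdot{\bf q}_j){\bf q}_i]}{[1-({\bf q}_i\cdot{\bf q}_j)^2]^{3/2}}-(\dot{\bf q}_i\cdot\dot{\bf q}_i){\bf q}_i,\qquad {\bf q}_i\cdot{\bf q}_i=1,\ \ {\bf q}_i\cdot\dot{\bf q}_i=0,$$ $i=1,\dots,n$, defined only for configurations with $({\bf q}_i\cdot{\bf q}_j)^2\ne 1$ for all $i\ne j$. *)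

(* Defs.v *)
From Stdlib Require Import Reals Lra List Arith.
Open Scope R_scope.

Record v3 : Type := mk3 { vx : R; vy : R; vz : R }.

Definition dot (a b : v3) : R := vx a * vx b + vy a * vy b + vz a * vz b.
Definition vadd (a b : v3) : v3 := mk3 (vx a + vx b) (vy a + vy b) (vz a + vz b).
Definition vscale (c : R) (a : v3) : v3 := mk3 (c * vx a) (c * vy a) (c * vz a).
Definition vsub (a b : v3) : v3 := vadd a (vscale (-1) b).
Definition vzero : v3 := mk3 0 0 0.

Definition has_deriv (f f' : R -> v3) : Prop :=
  forall t, derivable_pt_lim (fun s => vx (f s)) t (vx (f' t)) /\
            derivable_pt_lim (fun s => vy (f s)) t (vy (f' t)) /\
            derivable_pt_lim (fun s => vz (f s)) t (vz (f' t)).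

(* Right-hand side of the equations of motion in S^2 for body i
   (bodies indexed 1..n, masses mass j), given positions q and velocities qd. *)
Definition accel (n : nat) (mass : nat -> R) (q qd : nat -> R -> v3)
    (i : nat) (t : R) : v3 :=
  vsub
    (fold_right vadd vzero
      (map (fun j =>
         if Nat.eqb j i then vzero else
         vscale (mass j / (sqrt (1 - (dot (q i t) (q j t))^2)) ^ 3)
                (vsub (q j t) (vscale (dot (q i t) (q j t)) (q i t))))
       (seq 1 n)))
    (vscale (dot (qd i t) (qd i t)) (q i t)).

Definition is_solution (n : nat) (mass : nat -> R) (q : nat -> R -> v3) : Prop :=
  exists qd : nat -> R -> v3,
    forall i, (1 <= i <= n)%nat ->
      has_deriv (q i) (qd i) /\
      has_deriv (qd i) (fun t => accel n mass q qd i t) /\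
      forall t, dot (q i t) (q i t) = 1 /\ dot (q i t) (qd i t) = 0 /\
        (forall j, (1 <= j <= n)%nat -> j <> i -> (dot (q i t) (q j t))^2 <> 1).

Definition ngon_orbit (n : nat) (z w : R) (i : nat) (t : R) : v3 :=
  let r := sqrt (1 - z^2) in
  let a := 2 * PI * INR i / INR n in
  mk3 (r * cos (w * t + a)) (r * sin (w * t + a)) z.

Definition ngon_RE_both_signs (n : nat) (m z : R) : Prop :=
  (exists w, w > 0 /\ is_solution n (fun _ => m) (ngon_orbit n z w)) /\
  (exists w, w < 0 /\ is_solution n (fun _ => m) (ngon_orbit n z w)).

(* Main.v *)
Require Import Defs.
From Stdlib Require Import Reals Arith Lra Lia Psatz List.
Open Scope R_scope.

Lemma dlin : forall w a t, derivable_pt_lim (fun s => w*s + a) t w.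
Proof.
  intros w a t.
  assert (H := derivable_pt_lim_plus (mult_real_fct w id) (fct_cte a) t (w*1) 0
     (derivable_pt_lim_scal id w t 1 (derivable_pt_lim_id t)) (derivable_pt_lim_const a t)).
  assert (E: w*1+0 = w) by ring. rewrite E in H. exact H.
Qed.

Lemma dccos : forall c w a t l, l = -(c*w) * sin (w*t+a) ->
  derivable_pt_lim (fun s => c * cos (w*s + a)) t l.
Proof.
  intros c w a t l ->.
  assert (H := derivable_pt_lim_comp (fun s => w*s+a) cos t w (- sin (w*t+a)) (dlin w a t)
     (derivable_pt_lim_cos _)).
  assert (H2 := derivable_pt_lim_scal _ c t _ H).
  replace (-(c*w) * sin (w*t+a)) with (c * (- sin (w*t+a) * w)) by ring. exact H2.
Qed.

Lemma dcsin : forall c w a t l, l = (c*w) * cos (w*t+a) ->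
  derivable_pt_lim (fun s => c * sin (w*s + a)) t l.
Proof.
  intros c w a t l ->.
  assert (H := derivable_pt_lim_comp (fun s => w*s+a) sin t w (cos (w*t+a)) (dlin w a t)
     (derivable_pt_lim_sin _)).
  assert (H2 := derivable_pt_lim_scal _ c t _ H).
  replace ((c*w) * cos (w*t+a)) with (c * (cos (w*t+a) * w)) by ring. exact H2.
Qed.

Lemma dconst : forall c t l, l = 0 -> derivable_pt_lim (fun _ => c) t l.
Proof. intros c t l ->. exact (derivable_pt_lim_const c t). Qed.

Definition sumR (l : list R) : R := fold_right Rplus 0 l.

Lemma sumR_app : forall l1 l2, sumR (l1 ++ l2) = sumR l1 + sumR l2.
Proof. induction l1; intros; simpl; [ring| unfold sumR in *; simpl; rewrite IHl1; ring]. Qed.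

Lemma map_shift : forall (A:Type) (F : nat -> A) s c len,
  map F (seq (s + c) len) = map (fun k => F (k + c)%nat) (seq s len).
Proof.
  intros A F s c len; revert s; induction len; intros s; simpl; auto.
  f_equal. replace (S (s + c)) with (S s + c)%nat by lia. apply IHlen.
Qed.

Lemma sum_rev : forall len (f : nat -> R),
  sumR (map f (seq 1 len)) = sumR (map (fun k => f (S len - k)%nat) (seq 1 len)).
Proof.
  induction len; intros f; [reflexivity|].
  transitivity (sumR (map (fun k => f (S len - k)%nat) (seq 1 len)) + f (S len)).
  { rewrite seq_S, map_app, sumR_app, IHlen. unfold sumR; simpl.
    replace (1 + len)%nat with (S len) by lia. ring. }
  replace (seq 1 (S len)) with (1%nat :: seq (1+1) len) by reflexivity.
  cbn [map]. rewrite (map_shift _ _ 1 1 len).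
  replace (map (fun k => f (S (S len) - (k + 1))%nat) (seq 1 len))
    with (map (fun k => f (S len - k)%nat) (seq 1 len)).
  2:{ apply map_ext. intros k. f_equal. lia. }
  replace (S (S len) - 1)%nat with (S len) by lia.
  unfold sumR; simpl. ring.
Qed.

Lemma sum_neg : forall (A:Type) (f : A -> R) l,
  sumR (map (fun x => - f x) l) = - sumR (map f l).
Proof. induction l; unfold sumR in *; simpl; [ring| rewrite IHl; ring]. Qed.

Lemma sum_pos : forall (A:Type) (f : A -> R) l,
  (forall x, In x l -> 0 < f x) -> l <> nil -> 0 < sumR (map f l).
Proof.
  induction l; intros H Hn; [congruence|].
  unfold sumR; simpl. destruct l.
  - simpl. rewrite Rplus_0_r. apply H; simpl; auto.
  - assert (0 < f a) by (apply H; simpl; auto).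
    assert (0 < sumR (map f (a0::l))) by (apply IHl; [intros; apply H; simpl in *; tauto| congruence]).
    unfold sumR in *; lra.
Qed.

Definition gg (n k : nat) : R := 2 * PI * INR k / INR n.
Definition Si (n i : nat) (h : R -> R) : R :=
  sumR (map (fun j => if Nat.eqb j i then 0 else h (gg n j - gg n i)) (seq 1 n)).
Definition Sk (n : nat) (h : R -> R) : R := sumR (map (fun k => h (gg n k)) (seq 1 (n-1))).

Lemma rot : forall n i h, (1 <= i <= n)%nat -> (forall x, h (x + 2*PI) = h x) ->
  Si n i h = Sk n h.
Proof.
  intros n i h Hi Hp. unfold Si, Sk.
  assert (Hn : INR n <> 0) by (apply not_0_INR; lia).
  assert (Hs: seq 1 n = seq 1 (i-1) ++ i :: seq (S i) (n-i)).
  { assert (E: n = ((i-1) + S(n-i))%nat) by lia. rewrite E at 1.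
    rewrite seq_app. replace (1 + (i-1))%nat with i by lia. reflexivity. }
  assert (Hs2: seq 1 (n-1) = seq 1 (n-i) ++ seq (1 + (n-i)) (i-1)).
  { rewrite <- seq_app. f_equal. lia. }
  rewrite Hs, Hs2, !map_app, !sumR_app. cbn [map]. rewrite Nat.eqb_refl.
  rewrite (map_shift _ _ 1 (n-i) (i-1)).
  replace (seq (S i) (n-i)) with (seq (1+i) (n-i)) by reflexivity.
  rewrite (map_shift _ _ 1 i (n-i)).
  replace (map (fun j => if (j =? i)%nat then 0 else h (gg n j - gg n i)) (seq 1 (i - 1)))
    with (map (fun k => h (gg n (k + (n - i)))) (seq 1 (i - 1))).
  2:{ apply map_ext_in. intros j Hj. apply in_seq in Hj.
      destruct (Nat.eqb_spec j i); [lia|].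
      rewrite <- (Hp (gg n j - gg n i)). f_equal. unfold gg. rewrite plus_INR, minus_INR by lia. field. auto. }
  replace (map (fun k => if (k + i =? i)%nat then 0 else h (gg n (k + i) - gg n i)) (seq 1 (n - i)))
    with (map (fun k => h (gg n k)) (seq 1 (n - i))).
  2:{ apply map_ext_in. intros j Hj. apply in_seq in Hj.
      destruct (Nat.eqb_spec (j+i) i); [lia|].
      f_equal. unfold gg. rewrite plus_INR. field. auto. }
  unfold sumR; simpl. ring.
Qed.

Lemma refl0 : forall n h, (2 <= n)%nat -> (forall x, h (2*PI - x) = - h x) -> Sk n h = 0.
Proof.
  intros n h Hn Hr. unfold Sk.
  assert (HnR : INR n <> 0) by (apply not_0_INR; lia).
  assert (E := sum_rev (n-1) (fun k => h (gg n k))). cbv beta in E.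
  replace (map (fun k => h (gg n (S (n - 1) - k))) (seq 1 (n - 1)))
    with (map (fun k => - h (gg n k)) (seq 1 (n - 1))) in E.
  2:{ apply map_ext_in. intros j Hj. apply in_seq in Hj.
      rewrite <- Hr. f_equal. unfold gg. rewrite minus_INR by lia.
      replace (S (n-1)) with n by lia. field. auto. }
  rewrite (sum_neg _ (fun k => h (gg n k))) in E. lra.
Qed.

Lemma gg_half : forall n k, (1 <= k <= n-1)%nat -> exists a, gg n k = 2 * a /\ 0 < a < PI
   /\ ((2*k < n)%nat -> a < PI/2) /\ ((n < 2*k)%nat -> PI/2 < a).
Proof.
  intros n k Hk.
  assert (Hn: 0 < INR n) by (apply lt_0_INR; lia).
  assert (Hk1: 1 <= INR k) by (apply (le_INR 1); lia).
  assert (Hkn: INR k < INR n) by (apply lt_INR; lia).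
  assert (HP := PI_RGT_0).
  set (u := INR k / INR n).
  assert (Hu: u * INR n = INR k) by (unfold u; field; lra).
  exists (PI * u). split; [unfold gg, u; field; lra|].
  assert (0 < u) by nra. assert (u < 1) by nra.
  split; [split; nra|]. split.
  - intros Hq. apply lt_INR in Hq. rewrite mult_INR in Hq. simpl in Hq. nra.
  - intros Hq. apply lt_INR in Hq. rewrite mult_INR in Hq. simpl in Hq. nra.
Qed.

Lemma cos_lt1 : forall n k, (1 <= k <= n-1)%nat -> cos (gg n k) < 1.
Proof.
  intros n k Hk. destruct (gg_half n k Hk) as [a [E [Ha _]]].
  rewrite E, cos_2a_sin. assert (0 < sin a) by (apply sin_gt_0; lra). nra.
Qed.

Lemma cos_gtm1 : forall n k, (1 <= k <= n-1)%nat -> Nat.odd n = true -> -1 < cos (gg n k).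
Proof.
  intros n k Hk Ho. destruct (gg_half n k Hk) as [a [E [Ha [H1 H2]]]].
  rewrite E, cos_2a_cos.
  assert (cos a <> 0).
  { destruct (lt_eq_lt_dec (2*k) n) as [[L|L]|L].
    - specialize (H1 L). assert (0 < cos a) by (apply cos_gt_0; lra). lra.
    - subst n. rewrite Nat.odd_mul in Ho. simpl in Ho. discriminate.
    - specialize (H2 L). assert (cos a < 0) by (apply cos_lt_0; lra). lra. }
  assert (0 < cos a * cos a) by (apply Rsqr_pos_lt in H; unfold Rsqr in H; lra). lra.
Qed.

Lemma cos_diff : forall n i j, (1 <= i <= n)%nat -> (1 <= j <= n)%nat -> i <> j ->
  exists k, (1 <= k <= n-1)%nat /\ cos (gg n j - gg n i) = cos (gg n k).
Proof.
  intros n i j Hi Hj Hij.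
  assert (Hn : INR n <> 0) by (apply not_0_INR; lia).
  destruct (proj1 (Nat.lt_gt_cases i j) Hij) as [L|L].
  - exists (j - i)%nat. split; [lia|]. f_equal. unfold gg. rewrite minus_INR by lia. field. auto.
  - exists (i - j)%nat. split; [lia|]. rewrite <- cos_neg. f_equal. unfold gg.
    rewrite minus_INR by lia. field. auto.
Qed.

Definition Dd r x := r*r*cos x + (1 - r*r).
Definition cc m r x := m / (sqrt (1 - (Dd r x)^2))^3.
Definition h1 m r x := cc m r x * (1 - cos x).
Definition h2 m r x := cc m r x * sin x.

Lemma fold_x : forall i l (X : nat -> v3),
  vx (fold_right vadd vzero (map (fun j => if Nat.eqb j i then vzero else X j) l)) =
  sumR (map (fun j => if Nat.eqb j i then 0 else vx (X j)) l).
Proof. induction l; intros; unfold sumR in *; simpl; auto.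
  destruct (Nat.eqb a i); simpl; rewrite IHl; ring. Qed.
Lemma fold_y : forall i l (X : nat -> v3),
  vy (fold_right vadd vzero (map (fun j => if Nat.eqb j i then vzero else X j) l)) =
  sumR (map (fun j => if Nat.eqb j i then 0 else vy (X j)) l).
Proof. induction l; intros; unfold sumR in *; simpl; auto.
  destruct (Nat.eqb a i); simpl; rewrite IHl; ring. Qed.
Lemma fold_z : forall i l (X : nat -> v3),
  vz (fold_right vadd vzero (map (fun j => if Nat.eqb j i then vzero else X j) l)) =
  sumR (map (fun j => if Nat.eqb j i then 0 else vz (X j)) l).
Proof. induction l; intros; unfold sumR in *; simpl; auto.
  destruct (Nat.eqb a i); simpl; rewrite IHl; ring. Qed.

Lemma sum_lin : forall (i : nat) l (F : nat -> R) al be (f1 f2 : R -> R) (d : nat -> R),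
  (forall j, j <> i -> F j = al * f1 (d j) + be * f2 (d j)) ->
  sumR (map (fun j => if Nat.eqb j i then 0 else F j) l) =
  al * sumR (map (fun j => if Nat.eqb j i then 0 else f1 (d j)) l) +
  be * sumR (map (fun j => if Nat.eqb j i then 0 else f2 (d j)) l).
Proof.
  induction l; intros F al be f1 f2 d H; unfold sumR in *; simpl; [ring|].
  rewrite (IHl F al be f1 f2 d H). destruct (Nat.eqb_spec a i); [ring|].
  rewrite H by auto. ring.
Qed.

Lemma dot_q : forall n z w i j t,
  let r := sqrt (1 - z^2) in -1 < z < 1 ->
  dot (ngon_orbit n z w i t) (ngon_orbit n z w j t) = Dd r (gg n j - gg n i).
Proof.
  intros n z w i j t r Hz.
  assert (Hr: r * r = 1 - z*z) by (unfold r; rewrite sqrt_sqrt; nra).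
  unfold dot, ngon_orbit, Dd. cbn [vx vy vz]. fold r.
  replace (gg n j - gg n i) with ((w*t + gg n j) - (w*t + gg n i)) by ring.
  rewrite cos_minus. unfold gg. replace (z*z) with (1 - r*r) by lra. ring.
Qed.

Section T.
Variables (n : nat) (m z w : R) (i j : nat) (t : R).
Hypothesis Hz : -1 < z < 1.
Let r := sqrt (1 - z^2).
Let q := ngon_orbit n z w.
Let A := w*t + gg n i.
Let T := vscale (m / (sqrt (1 - (dot (q i t) (q j t))^2))^3)
           (vsub (q j t) (vscale (dot (q i t) (q j t)) (q i t))).

Lemma term_x : vx T = (-r*(1-r*r)*cos A) * h1 m r (gg n j - gg n i)
                     + (-r*sin A) * h2 m r (gg n j - gg n i).
Proof.
  unfold T, q. rewrite (dot_q n z w i j t Hz). fold r.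
  set (d := gg n j - gg n i).
  unfold h1, h2, cc. set (K := m / sqrt (1 - Dd r d ^ 2) ^ 3).
  unfold ngon_orbit. cbn [vx vy vz vscale vsub vadd]. fold r.
  replace (w*t + 2 * PI * INR j / INR n) with (A + d) by (unfold A, d, gg; ring).
  fold (gg n i). fold A.
  rewrite cos_plus. unfold Dd. ring.
Qed.

Lemma term_y : vy T = (-r*(1-r*r)*sin A) * h1 m r (gg n j - gg n i)
                     + (r*cos A) * h2 m r (gg n j - gg n i).
Proof.
  unfold T, q. rewrite (dot_q n z w i j t Hz). fold r.
  set (d := gg n j - gg n i).
  unfold h1, h2, cc. set (K := m / sqrt (1 - Dd r d ^ 2) ^ 3).
  unfold ngon_orbit. cbn [vx vy vz vscale vsub vadd]. fold r.
  replace (w*t + 2 * PI * INR j / INR n) with (A + d) by (unfold A, d, gg; ring).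
  fold (gg n i). fold A.
  rewrite sin_plus. unfold Dd. ring.
Qed.

Lemma term_z : vz T = (z*r*r) * h1 m r (gg n j - gg n i)
                     + 0 * h2 m r (gg n j - gg n i).
Proof.
  unfold T, q. rewrite (dot_q n z w i j t Hz). fold r.
  set (d := gg n j - gg n i).
  unfold h1, h2, cc. set (K := m / sqrt (1 - Dd r d ^ 2) ^ 3).
  unfold ngon_orbit. cbn [vx vy vz vscale vsub vadd]. fold r.
 unfold Dd. ring.
Qed.
End T.

Definition qdo (n : nat) (z w : R) (i : nat) (t : R) : v3 :=
  mk3 (-(sqrt (1 - z^2)*w) * sin (w*t + 2 * PI * INR i / INR n))
      ((sqrt (1 - z^2)*w) * cos (w*t + 2 * PI * INR i / INR n)) 0.

Lemma dot_qd : forall n z w i t, dot (qdo n z w i t) (qdo n z w i t) =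
  sqrt (1 - z^2) * sqrt (1 - z^2) * w * w.
Proof.
  intros. unfold dot, qdo; cbn [vx vy vz].
  assert (H := sin2_cos2 (w*t + 2 * PI * INR i / INR n)). unfold Rsqr in H.
  set (s := sin _) in *. set (c := cos _) in *.
  replace (sqrt (1 - z^2) * sqrt (1 - z^2) * w * w) with
     (sqrt (1 - z^2) * sqrt (1 - z^2) * w * w * (s*s + c*c)) by (rewrite H; ring). ring.
Qed.

Lemma accel_x : forall n m z w i t, -1 < z < 1 ->
  let r := sqrt (1 - z^2) in let A := w*t + gg n i in
  vx (accel n (fun _ => m) (ngon_orbit n z w) (qdo n z w) i t) =
  (-r*(1-r*r)*cos A) * Si n i (h1 m r) + (-r*sin A) * Si n i (h2 m r) - r*r*w*w*(r*cos A).
Proof.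
  intros n m z w i t Hz r A. unfold accel, vsub. cbn [vx vadd vscale].
  rewrite fold_x.
  rewrite (sum_lin i _ _ (-r*(1-r*r)*cos A) (-r*sin A) (h1 m r) (h2 m r) (fun j => gg n j - gg n i)).
  2:{ intros j _. exact (term_x n m z w i j t Hz). }
  rewrite dot_qd. unfold Si. fold r. unfold ngon_orbit; cbn [vx]. fold r. unfold A, gg. ring.
Qed.

Lemma accel_y : forall n m z w i t, -1 < z < 1 ->
  let r := sqrt (1 - z^2) in let A := w*t + gg n i in
  vy (accel n (fun _ => m) (ngon_orbit n z w) (qdo n z w) i t) =
  (-r*(1-r*r)*sin A) * Si n i (h1 m r) + (r*cos A) * Si n i (h2 m r) - r*r*w*w*(r*sin A).
Proof.
  intros n m z w i t Hz r A. unfold accel, vsub. cbn [vy vadd vscale].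
  rewrite fold_y.
  rewrite (sum_lin i _ _ (-r*(1-r*r)*sin A) (r*cos A) (h1 m r) (h2 m r) (fun j => gg n j - gg n i)).
  2:{ intros j _. exact (term_y n m z w i j t Hz). }
  rewrite dot_qd. unfold Si. fold r. unfold ngon_orbit; cbn [vy]. fold r. unfold A, gg. ring.
Qed.

Lemma accel_z : forall n m z w i t, -1 < z < 1 ->
  let r := sqrt (1 - z^2) in
  vz (accel n (fun _ => m) (ngon_orbit n z w) (qdo n z w) i t) =
  (z*r*r) * Si n i (h1 m r) + 0 * Si n i (h2 m r) - r*r*w*w*z.
Proof.
  intros n m z w i t Hz r. unfold accel, vsub. cbn [vz vadd vscale].
  rewrite fold_z.
  rewrite (sum_lin i _ _ (z*r*r) 0 (h1 m r) (h2 m r) (fun j => gg n j - gg n i)).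
  2:{ intros j _. exact (term_z n m z w i j t Hz). }
  rewrite dot_qd. unfold Si. fold r. unfold ngon_orbit; cbn [vz]. fold r. ring.
Qed.

Lemma cos_per : forall x, cos (x + 2*PI) = cos x.
Proof. intros. rewrite cos_plus, cos_2PI, sin_2PI. ring. Qed.
Lemma sin_per : forall x, sin (x + 2*PI) = sin x.
Proof. intros. rewrite sin_plus, cos_2PI, sin_2PI. ring. Qed.
Lemma cos_ref : forall x, cos (2*PI - x) = cos x.
Proof. intros. rewrite cos_minus, cos_2PI, sin_2PI. ring. Qed.
Lemma sin_ref : forall x, sin (2*PI - x) = - sin x.
Proof. intros. rewrite sin_minus, cos_2PI, sin_2PI. ring. Qed.

Lemma h1_per : forall m r x, h1 m r (x + 2*PI) = h1 m r x.
Proof. intros. unfold h1, cc, Dd. rewrite cos_per. reflexivity. Qed.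
Lemma h2_per : forall m r x, h2 m r (x + 2*PI) = h2 m r x.
Proof. intros. unfold h2, cc, Dd. rewrite cos_per, sin_per. reflexivity. Qed.
Lemma h2_ref : forall m r x, h2 m r (2*PI - x) = - h2 m r x.
Proof. intros. unfold h2, cc, Dd. rewrite cos_ref, sin_ref. ring. Qed.

Lemma rr_facts : forall z, -1 < z < 1 ->
  sqrt (1 - z^2) * sqrt (1 - z^2) = 1 - z*z /\ 0 < 1 - z*z <= 1.
Proof. intros z Hz. split; [rewrite sqrt_sqrt; [ring| nra] | nra]. Qed.

Lemma core : forall n m z w, (2 <= n)%nat -> m > 0 -> -1 < z < 1 ->
  (forall k, (1 <= k <= n-1)%nat ->
     sqrt (1 - z^2) * sqrt (1 - z^2) * (1 - cos (gg n k)) < 2) ->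
  w * w = Sk n (h1 m (sqrt (1 - z^2))) ->
  is_solution n (fun _ => m) (ngon_orbit n z w).
Proof.
  intros n m z w Hn Hm Hz Hgood Hw.
  destruct (rr_facts z Hz) as [Hr Hr1].
  set (r := sqrt (1 - z^2)) in *.
  exists (qdo n z w). intros i Hi.
  assert (E1 : Si n i (h1 m r) = Sk n (h1 m r)) by (apply rot; auto; apply h1_per).
  assert (E2 : Si n i (h2 m r) = 0).
  { rewrite rot; auto; [apply refl0; auto; apply h2_ref| apply h2_per]. }
  split; [|split].
  - intros t. unfold ngon_orbit, qdo; cbn [vx vy vz]. fold r.
    split; [|split].
    + apply dccos. ring.
    + apply dcsin. ring.
    + apply dconst. reflexivity.
  - intros t. split; [|split].
    + rewrite accel_x by auto. fold r. rewrite E1, E2, <- Hw.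
      unfold qdo; cbn [vx]. fold r. apply dcsin. unfold gg. ring.
    + rewrite accel_y by auto. fold r. rewrite E1, E2, <- Hw.
      unfold qdo; cbn [vy]. fold r. apply dccos. unfold gg. ring.
    + rewrite accel_z by auto. fold r. rewrite E1, E2, <- Hw.
      unfold qdo; cbn [vz]. apply dconst. ring.
  - intros t. split; [|split].
    + unfold dot, ngon_orbit; cbn [vx vy vz]. fold r.
      assert (H := sin2_cos2 (w*t + 2 * PI * INR i / INR n)). unfold Rsqr in H.
      set (s := sin _) in *. set (c := cos _) in *.
      replace (r * c * (r * c) + r * s * (r * s)) with (r * r * (s*s + c*c)) by ring.
      rewrite H, Hr. ring.
    + unfold dot, ngon_orbit, qdo; cbn [vx vy vz]. fold r. ring.
    + intros j Hj Hji. rewrite dot_q by auto. fold r.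
      destruct (cos_diff n i j Hi Hj (not_eq_sym Hji)) as [k [Hk Ec]].
      unfold Dd. rewrite Ec.
      assert (Hc := cos_lt1 n k Hk). assert (Hg := Hgood k Hk). fold r in Hg.
      set (c := cos (gg n k)) in *.
      assert (-1 < r*r*c + (1 - r*r) < 1) by nra.
      intro Hsq. nra.
Qed.

Lemma S_pos : forall n m z, (2 <= n)%nat -> m > 0 -> -1 < z < 1 ->
  (forall k, (1 <= k <= n-1)%nat ->
     sqrt (1 - z^2) * sqrt (1 - z^2) * (1 - cos (gg n k)) < 2) ->
  0 < Sk n (h1 m (sqrt (1 - z^2))).
Proof.
  intros n m z Hn Hm Hz Hgood.
  destruct (rr_facts z Hz) as [Hr Hr1].
  set (r := sqrt (1 - z^2)) in *.
  unfold Sk. apply sum_pos.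
  - intros k Hk. apply in_seq in Hk. assert (Hk' : (1 <= k <= n-1)%nat) by lia.
    assert (Hc := cos_lt1 n k Hk'). assert (Hg := Hgood k Hk'). fold r in Hg.
    unfold h1, cc, Dd. set (c := cos (gg n k)) in *.
    assert (-1 < r*r*c + (1 - r*r) < 1) by nra.
    assert (0 < 1 - (r*r*c + (1 - r*r))^2) by nra.
    apply Rmult_lt_0_compat; [|lra].
    unfold Rdiv. apply Rmult_lt_0_compat; [lra|]. apply Rinv_0_lt_compat.
    apply pow_lt. apply sqrt_lt_R0. auto.
  - destruct n as [|[|n]]; [lia|lia|]. simpl. discriminate.
Qed.

Lemma both : forall n m z, (2 <= n)%nat -> m > 0 -> -1 < z < 1 ->
  (forall k, (1 <= k <= n-1)%nat ->
     sqrt (1 - z^2) * sqrt (1 - z^2) * (1 - cos (gg n k)) < 2) ->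
  ngon_RE_both_signs n m z.
Proof.
  intros n m z Hn Hm Hz Hg.
  assert (HS := S_pos n m z Hn Hm Hz Hg).
  set (S := Sk n (h1 m (sqrt (1 - z^2)))) in *.
  assert (Hs := sqrt_lt_R0 S HS). assert (Hss := sqrt_sqrt S (Rlt_le _ _ HS)).
  split.
  - exists (sqrt S). split; [lra|]. apply core; auto.
  - exists (- sqrt S). split; [lra|]. apply core; auto. fold S. nra.
Qed.

Theorem mainTheorem7 (n : nat) (m : R) :
  (2 <= n)%nat -> m > 0 ->
  (Nat.odd n = true ->
     forall z, -1 < z < 1 -> ngon_RE_both_signs n m z) /\
  (Nat.even n = true ->
     forall z, (-1 < z < 0 \/ 0 < z < 1) -> ngon_RE_both_signs n m z).
Proof.
  intros Hn Hm. split.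
  - intros Ho z Hz. apply both; auto. intros k Hk.
    destruct (rr_facts z Hz) as [Hr Hr1]. rewrite Hr.
    assert (H := cos_gtm1 n k Hk Ho). assert (H2 := cos_lt1 n k Hk). nra.
  - intros He z Hz. assert (Hz' : -1 < z < 1) by lra. apply both; auto. intros k Hk.
    destruct (rr_facts z Hz') as [Hr Hr1]. rewrite Hr.
    assert (H := COS_bound (gg n k)). assert (0 < z*z) by (destruct Hz; nra). nra.
Qed.
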